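(* Let $\Phi \in \mathbb{R}^{M \times N}$, let $\Lambda \subset \{1, 2, \dots, N\}$, and let $\widetilde{x} \in \mathbb{R}^N$ with $\mathrm{supp}(\widetilde{x}) \cap \Lambda = \emptyset$. Define $h = A_\Lambda^T A_\Lambda \widetilde{x}$. If $\Phi$ satisfies the restricted isometry property of order $\|\widetilde{x}\|_0 + |\Lambda| + 1$ with isometry constant $\delta$, then $$|h(j) - \widetilde{x}(j)| \le \frac{\delta}{1-\delta}\|\widetilde{x}\|_2$$ for all $j \notin \Lambda$.
   Context: For $x \in \mathbb{R}^N$, $\|x\|_0 := |\mathrm{supp}(x)|$. A matrix $\Phi \in \mathbb{R}^{M\times N}$ satisfies the restricted isometry property (RIP) of order $K$ with isometry constant $\delta \in (0,1)$ if $(1-\delta)\|x\|_2^2 \le \|\Phi x\|_2^2 \le (1+\delta)\|x\|_2^2$ for all $x \in \mathbb{R}^N$ with $\|x\|_0 \le K$. For $\Lambda \subset \{1,\dots,N\}$, $\Phi_\Lambda$ is the submatrix of $\Phi$ consisting of the columns indexed by $\Lambda$, $P_\Lambda$ is the orthogonal projection onto the column space of $\Phi_\Lambda$, $P_\Lambda^\perp = I - P_\Lambda$, and $A_\Lambda := P_\Lambda^\perp \Phi$. *)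

(* Defs.v *)
From HB Require Import structures.
From mathcomp Require Import all_boot all_order all_algebra.
Set Implicit Arguments. Unset Strict Implicit. Unset Printing Implicit Defensive.
Import Order.TTheory GRing.Theory Num.Theory.
Local Open Scope ring_scope.

Section Defs.
Variable R : rcfType.

Definition supp (N : nat) (x : 'cV[R]_N) : {set 'I_N} := [set j | x j 0 != 0].
Definition l0 (N : nat) (x : 'cV[R]_N) : nat := #|supp x|.

Definition sqnorm2 (n : nat) (x : 'cV[R]_n) : R := \sum_(i < n) (x i 0) ^+ 2.
Definition norm2 (n : nat) (x : 'cV[R]_n) : R := Num.sqrt (sqnorm2 x).

Definition RIP (M N : nat) (Phi : 'M[R]_(M, N)) (K : nat) (delta : R) : Prop :=
  0 < delta < 1 /\
  forall x : 'cV[R]_N, (l0 x <= K)%N ->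
    (1 - delta) * sqnorm2 x <= sqnorm2 (Phi *m x) /\
    sqnorm2 (Phi *m x) <= (1 + delta) * sqnorm2 x.

(* Phi_Lambda: the submatrix of the columns of Phi indexed by Lambda
   (in increasing order of the indices) *)
Definition subcols (M N : nat) (Phi : 'M[R]_(M, N)) (L : {set 'I_N})
  : 'M[R]_(M, #|L|) := colsub (fun k : 'I_#|L| => enum_val k) Phi.

(* P is the orthogonal projection of R^M onto the column space of A:
   P is symmetric, idempotent, and its column space equals that of A
   (column spaces are compared as row spaces of the transposes). *)
Definition is_orth_proj (M k : nat) (P : 'M[R]_M) (A : 'M[R]_(M, k)) : Prop :=
  P^T = P /\ P *m P = P /\ (P^T == A^T)%MS.

End Defs.

(* Main.v *)
Require Import Defs.
From HB Require Import structures.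
From mathcomp Require Import all_boot all_order all_algebra.
From mathcomp Require Import ring lra.
Import Order.TTheory GRing.Theory Num.Theory.
Local Open Scope ring_scope.

Section Helpers.
Variable R : rcfType.
Set Implicit Arguments.

Definition bil {n} (D : 'M[R]_n) (u v : 'cV[R]_n) : R := (u^T *m D *m v) 0 0.

Lemma sqnorm2E n (x : 'cV[R]_n) : sqnorm2 x = bil 1%:M x x.
Proof. rewrite /sqnorm2 /bil mulmx1 mxE; apply: eq_bigr => i _; by rewrite !mxE expr2. Qed.

Lemma sq_ge0 n (x : 'cV[R]_n) : 0 <= sqnorm2 x.
Proof. by apply: sumr_ge0 => i _; apply: sqr_ge0. Qed.

Lemma sqnorm2_eq0 n (x : 'cV[R]_n) : sqnorm2 x = 0 -> x = 0.
Proof.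
move/eqP; rewrite /sqnorm2 psumr_eq0; last by move=> i _; apply: sqr_ge0.
move=> /allP H; apply/matrixP => i j; rewrite (ord1 j) mxE.
by have := H i (mem_index_enum i); rewrite sqrf_eq0 => /eqP.
Qed.

Lemma bilDl n (D : 'M[R]_n) u v w : bil D (u + v) w = bil D u w + bil D v w.
Proof. by rewrite /bil linearD /= !mulmxDl mxE. Qed.
Lemma bilDr n (D : 'M[R]_n) u v w : bil D w (u + v) = bil D w u + bil D w v.
Proof. by rewrite /bil !mulmxDr mxE. Qed.
Lemma bilZl n (D : 'M[R]_n) a u w : bil D (a *: u) w = a * bil D u w.
Proof. by rewrite /bil linearZ /= -!scalemxAl mxE. Qed.
Lemma bilZr n (D : 'M[R]_n) a u w : bil D w (a *: u) = a * bil D w u.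
Proof. by rewrite /bil -!scalemxAr mxE. Qed.
Lemma bilBD n (D1 D2 : 'M[R]_n) u w : bil (D1 - D2) u w = bil D1 u w - bil D2 u w.
Proof. by rewrite /bil mulmxBr mulmxBl !mxE. Qed.
Lemma bil0l n (D : 'M[R]_n) w : bil D 0 w = 0.
Proof. by rewrite /bil trmx0 !mul0mx mxE. Qed.
Lemma bil0r n (D : 'M[R]_n) w : bil D w 0 = 0.
Proof. by rewrite /bil mulmx0 mxE. Qed.
Lemma bilC n (D : 'M[R]_n) : D^T = D -> forall u v, bil D u v = bil D v u.
Proof.
move=> sD u v; rewrite /bil.
transitivity (((u^T *m D *m v)^T) 0 0); first by rewrite [RHS]mxE.
by rewrite !trmx_mul trmxK sD mulmxA.
Qed.
Lemma bil_mul m n (Phi : 'M[R]_(m, n)) u v :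
  bil (Phi^T *m Phi) u v = bil 1%:M (Phi *m u) (Phi *m v).
Proof. by rewrite /bil mulmx1 trmx_mul !mulmxA. Qed.

Lemma expand n (E : 'M[R]_n) u v t : E^T = E ->
  bil E (u + t*:v) (u + t*:v) = bil E u u + 2 * t * bil E u v + t^+2 * bil E v v.
Proof. move=> sE; rewrite !(bilDl, bilDr, bilZl, bilZr) (bilC sE v u); ring. Qed.

Lemma polar_bound n (D : 'M[R]_n) (u v : 'cV[R]_n) (c : R) :
  D^T = D -> 0 <= c ->
  (forall t, `|bil D (u + t *: v) (u + t *: v)| <= c * sqnorm2 (u + t *: v)) ->
  `|bil D u v| <= c * norm2 u * norm2 v.
Proof.
move=> sD c0 H.
have nn : forall w : 'cV[R]_n, 0 <= norm2 w by move=> w; apply: sqrtr_ge0.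
case: (eqVneq (sqnorm2 u) 0) => [/sqnorm2_eq0 -> | nu].
  by rewrite bil0l normr0 mulr_ge0 ?mulr_ge0.
case: (eqVneq (sqnorm2 v) 0) => [/sqnorm2_eq0 -> | nv].
  by rewrite bil0r normr0 mulr_ge0 ?mulr_ge0.
have a0 : 0 < sqnorm2 u by rewrite lt_def nu sq_ge0.
have b0 : 0 < sqnorm2 v by rewrite lt_def nv sq_ge0.
have saa : norm2 u ^+ 2 = sqnorm2 u by rewrite sqr_sqrtr // ltW.
have sbb : norm2 v ^+ 2 = sqnorm2 v by rewrite sqr_sqrtr // ltW.
have sa0 : 0 < norm2 u by rewrite sqrtr_gt0.
have sb0 : 0 < norm2 v by rewrite sqrtr_gt0.
pose t := norm2 u / norm2 v.
have tsb : t * norm2 v = norm2 u by rewrite /t divfK // gt_eqF.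
have t0 : 0 < t by rewrite /t divr_gt0.
have t2 : t ^+ 2 * sqnorm2 v = sqnorm2 u.
  by rewrite -sbb -saa -tsb; ring.
have H1 := H t; have H2 := H (- t).
move: H1 H2; rewrite !sqnorm2E !expand ?trmx1 // sqrrN.
rewrite -!sqnorm2E t2 !ler_norml => /andP[H1 H1'] /andP[H2 H2'].
have key1 : t * bil D u v <= c * sqnorm2 u by nra.
have key2 : - (t * bil D u v) <= c * sqnorm2 u by nra.
have k1 : norm2 u * bil D u v <= c * sqnorm2 u * norm2 v.
  rewrite -tsb; nra.
have k2 : - (norm2 u * bil D u v) <= c * sqnorm2 u * norm2 v.
  rewrite -tsb; nra.
rewrite -saa in k1 k2.
apply/andP; split; nra.
Qed.

Lemma supp_add n (u v : 'cV[R]_n) t : supp (u + t *: v) \subset supp u :|: supp v.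
Proof.
apply/subsetP => i; rewrite !inE !mxE; apply: contraR.
by rewrite negb_or !negbK => /andP[/eqP -> /eqP ->]; rewrite mulr0 addr0.
Qed.

Lemma cardU_le (T : finType) (A B : {set T}) : (#|A :|: B| <= #|A| + #|B|)%N.
Proof. by rewrite cardsU leq_subr. Qed.

Lemma rip_form M N (Phi : 'M[R]_(M, N)) K delta : RIP Phi K delta ->
  forall w, (l0 w <= K)%N ->
  `|bil (Phi^T *m Phi - 1%:M) w w| <= delta * sqnorm2 w.
Proof.
move=> [/andP[d0 d1] rip] w lw; have [r1 r2] := rip w lw.
rewrite bilBD bil_mul -!sqnorm2E ler_norml; apply/andP; split; lra.
Qed.

Lemma sym_rip M N (Phi : 'M[R]_(M, N)) : (Phi^T *m Phi - 1%:M)^T = Phi^T *m Phi - 1%:M.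
Proof. by rewrite linearB /= trmx_mul trmxK trmx1. Qed.

Definition selm N (L : {set 'I_N}) : 'M[R]_(N, #|L|) :=
  \matrix_(i, k) ((enum_val k == i)%:R).

Lemma subcolsE M N (Phi : 'M[R]_(M, N)) L : subcols Phi L = Phi *m selm L.
Proof.
apply/matrixP => r k; rewrite !mxE (bigD1 (enum_val k)) //= big1.
  by rewrite !mxE eqxx mulr1 addr0.
move=> i ne; rewrite mxE eq_sym (negbTE ne); by rewrite mulr0.
Qed.

Lemma supp_sel N (L : {set 'I_N}) (v : 'cV[R]_#|L|) : supp (selm L *m v) \subset L.
Proof.
apply/subsetP => i; rewrite inE mxE; apply: contraR => iL; rewrite big1 // => k _.
rewrite mxE (_ : (enum_val k == i) = false) ?mul0r //.
apply/negbTE; apply: contraNneq iL => <-; exact: enum_valP.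
Qed.

Lemma proj_lower M N (Phi : 'M[R]_(M, N)) (L S : {set 'I_N}) (P : 'M[R]_M) K delta :
  is_orth_proj P (subcols Phi L) -> RIP Phi K delta -> (#|S| + #|L| <= K)%N ->
  S :&: L = set0 ->
  forall w, supp w \subset S ->
  `|bil (((1%:M - P) *m Phi)^T *m ((1%:M - P) *m Phi) - 1%:M) w w|
    <= delta / (1 - delta) * sqnorm2 w.
Proof.
move=> [PT [PP Psub]] rip hK SL w sw.
have [/andP[d0 d1] rip2] := rip.
case/andP: Psub => /submxP [Dm PDm] _.
have Pe : P = Phi *m selm L *m Dm^T.
  by rewrite -[P]trmxK PDm trmx_mul trmxK subcolsE.
pose y := Phi *m w.
pose z := selm L *m (Dm^T *m y).
have Py : P *m y = Phi *m z by rewrite Pe /z !mulmxA.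
have hz : supp z \subset L by apply: supp_sel.
have wz : bil 1%:M w z = 0.
  rewrite /bil mulmx1 mxE big1 // => i _; rewrite [w^T _ _]mxE.
  case: (boolP (i \in L)) => iL.
    have : i \notin supp w.
      apply/negP => iw; have : i \in S :&: L by rewrite inE iL (subsetP sw).
      by rewrite SL inE.
    by rewrite inE negbK => /eqP ->; rewrite mul0r.
  have : i \notin supp z by apply: contra iL; apply: (subsetP hz).
  by rewrite inE negbK => /eqP ->; rewrite mulr0.
have PP' : (1%:M - P)^T *m (1%:M - P) = 1%:M - P.
  by rewrite (raddfB (@trmx R M M)) /= tr_scalar_mx PT mulmxBl mul1mx mulmxBr mulmx1 PP subrr subr0.
have sqA : sqnorm2 ((1%:M - P) *m Phi *m w) = sqnorm2 y - sqnorm2 (P *m y).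
  rewrite -mulmxA -/y !sqnorm2E -!bil_mul PP' PT PP bilBD.
  by rewrite bil_mul.
have s0c : sqnorm2 (P *m y) = bil (Phi^T *m Phi - 1%:M) w z.
  rewrite bilBD wz subr0 bil_mul -/y -Py sqnorm2E -bil_mul PT PP.
  by rewrite /bil mulmx1 mulmxA.
have lK : forall v : 'cV[R]_N, supp v \subset S :|: L -> (l0 v <= K)%N.
  move=> v sv; apply: leq_trans hK; apply: leq_trans (cardU_le S L).
  exact: subset_leq_card.
have inner := @polar_bound N (Phi^T *m Phi - 1%:M) w z delta (sym_rip Phi) (ltW d0)
  (fun t => rip_form rip _ (lK _ (subset_trans (supp_add w z t) (setUSS sw hz)))).
rewrite -s0c in inner.
have [rz _] := rip2 z (leq_trans (subset_leq_card hz) (leq_trans (leq_addl _ _) hK)).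
rewrite -Py in rz.
have [ry1 ry2] := rip2 w (lK _ (subset_trans sw (subsetUl S L))).
rewrite -/y in ry1 ry2.
rewrite bilBD bil_mul -!sqnorm2E sqA.
have s0p := sq_ge0 (P *m y).
have nw0 : 0 <= norm2 w by apply: sqrtr_ge0.
have nz0 : 0 <= norm2 z by apply: sqrtr_ge0.
have nww : norm2 w ^+ 2 = sqnorm2 w by rewrite sqr_sqrtr // sq_ge0.
have nzz : norm2 z ^+ 2 = sqnorm2 z by rewrite sqr_sqrtr // sq_ge0.
move: inner; rewrite ger0_norm // => inner.
have s0b : (1 - delta) * sqnorm2 (P *m y) <= delta ^+ 2 * sqnorm2 w.
  rewrite -nww -nzz in rz *.
  case: (eqVneq (norm2 z) 0) => [z0 | zn0].
    rewrite z0 mulr0 in inner; nra.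
  have zp : 0 < norm2 z by rewrite lt_def zn0 nz0.
  have h1 : (1 - delta) * norm2 z <= delta * norm2 w by nra.
  nra.
have d1' : 0 < 1 - delta by lra.
have hd : delta / (1 - delta) * (1 - delta) = delta by rewrite divfK // gt_eqF.
rewrite ler_norml; apply/andP; split; nra.
Qed.

End Helpers.
Arguments bil {R n}.

Theorem lemma3 (R : rcfType) (M N : nat) (Phi : 'M[R]_(M, N))
    (L : {set 'I_N}) (x : 'cV[R]_N) (delta : R) (P : 'M[R]_M) :
  is_orth_proj P (subcols Phi L) ->
  supp x :&: L = set0 ->
  RIP Phi (l0 x + #|L| + 1) delta ->
  let A := (1%:M - P) *m Phi in
  let h := A^T *m A *m x in
  forall j : 'I_N, j \notin L ->
    `|h j 0 - x j 0| <= delta / (1 - delta) * norm2 x.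
Proof.
move=> OP dis rip A h j jL.
have [/andP[d0 d1] _] := rip.
pose S := supp x :|: [set j].
have SL : S :&: L = set0.
  apply/setP => i; rewrite /S !inE; case: (eqVneq i j) => [-> | _].
    by rewrite orbT (negbTE jL).
  by rewrite orbF; move/setP: dis => /(_ i); rewrite !inE.
have hK : (#|S| + #|L| <= l0 x + #|L| + 1)%N.
  rewrite addnAC leq_add2r; apply: leq_trans (cardU_le _ _) _.
  by rewrite cards1.
have key := proj_lower OP rip hK SL.
pose e : 'cV[R]_N := delta_mx j 0.
have se : supp e \subset [set j].
  apply/subsetP => i; rewrite !inE mxE andbT; case: (i == j) => //.
  by rewrite mulr0n eqxx.
have ne : sqnorm2 e = 1.
  rewrite /sqnorm2 (bigD1 j) //= big1 => [|i ij].
    by rewrite !mxE !eqxx /= expr1n addr0.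
  by rewrite !mxE (negbTE ij) /= mulr0n expr0n.
have n1 : norm2 e = 1 by rewrite /norm2 ne sqrtr1.
have dp : 0 <= delta / (1 - delta) by rewrite divr_ge0 // ?subr_ge0 ltW.
have Hb := @polar_bound R N (A^T *m A - 1%:M) x e (delta / (1 - delta)) (@sym_rip R M N A) dp
  (fun t => key _ (subset_trans (@supp_add R N x e t) (setUS _ se))).
rewrite n1 mulr1 in Hb.
have eqh : h j 0 - x j 0 = bil (A^T *m A - 1%:M) x e.
  rewrite (@bilC R N _ (@sym_rip R M N A)) /bil -mulmxA trmx_delta -rowE mxE mulmxBl mul1mx.
  by rewrite !mxE.
by rewrite eqh.
Qed.
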